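(* Let $\mathcal{P}$ be a finite poset of composition length at least $3$ whose Hasse diagram is a rooted tree, and assume the root has a unique successor. Let $M$ be a $k\mathcal{P}$-module such that $[M]\in\mathsf{G}^0(\mathcal{P},k)$, i.e. $\partial_0^*M\cong\partial_1^*M$ as $k\mathcal{G}^{\mathcal{P}}_1$-modules. Then $$M\cong\underline{k}^{\oplus n}\oplus S_{\mathcal{P}}^{\oplus d}$$ for some non-negative integers $n,d$; in fact $n=\operatorname{rank}M(x<y)$ for any strict relation $x<y$ in $\mathcal{P}$ and $d=\dim_k\ker M(x<y)$ for any non-maximal $x$ and any $y>x$.
   Context: A poset is viewed as a category with a unique morphism $x\to y$ iff $x\le y$; a $k\mathcal{P}$-module is a functor to finite-dimensional $k$-vector spaces ($k$ a field). The composition length is the maximal length of a chain of covering relations. The Hasse diagram is a rooted tree means there is a unique minimal element (the root) and every other element has exactly one lower cover; a successor of $x$ is an upper cover of $x$. $\underline{k}$ is the constant module with value $k$ and identity maps; $S_{\mathcal{P}}$ is the module with value $k$ at every element and zero maps for all strict relations. $\mathcal{G}^{\mathcal{P}}_1$ is the poset of strict relations $a<b$ (written $[a<b]$) with $[a<b]\le[c<d]$ iff they are equal or $b\le c$; $\partial_0[a<b]=b$, $\partial_1[a<b]=a$, $F^*M=M\circ F$; $\mathsf{G}^0(\mathcal{P},k)$ is the kernel of $\partial_0^*-\partial_1^*$ on the split Grothendieck group of $k\mathcal{P}$-modules. *)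

(* Defs.v *)
From HB Require Import structures.
From mathcomp Require Import all_boot all_order all_algebra.
Set Implicit Arguments. Unset Strict Implicit. Unset Printing Implicit Defensive.
Import Order.TTheory GRing.Theory.
Local Open Scope ring_scope.

(* Vector spaces are k^(mdim x); linear maps are matrices in
   MathComp's row-vector convention (v |-> v *m A), so the map for x <= y is
   mmap x y : 'M_(mdim x, mdim y) and composition x->y->z is A_xy *m A_yz. *)
Record pmod (k : fieldType) (I : Type) := PMod {
  mdim : I -> nat;
  mmap : forall x y : I, 'M[k]_(mdim x, mdim y) }.

Definition is_module (k : fieldType) (I : Type) (R : I -> I -> bool)
    (M : pmod k I) : Prop :=
  (forall x, mmap M x x = 1%:M) /\
  (forall x y z, R x y -> R y z -> mmap M x y *m mmap M y z = mmap M x z).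

Definition mod_iso (k : fieldType) (I : Type) (R : I -> I -> bool)
    (M N : pmod k I) : Prop :=
  exists (phi : forall x, 'M[k]_(mdim M x, mdim N x))
         (psi : forall x, 'M[k]_(mdim N x, mdim M x)),
    (forall x, phi x *m psi x = 1%:M /\ psi x *m phi x = 1%:M) /\
    (forall x y, R x y -> mmap M x y *m phi y = phi x *m mmap N x y).

Definition pullback (k : fieldType) (I J : Type) (F : J -> I) (M : pmod k I)
  : pmod k J := @PMod k J (fun u => mdim M (F u)) (fun u v => mmap M (F u) (F v)).

Definition dsum (k : fieldType) (I : Type) (M N : pmod k I) : pmod k I :=
  @PMod k I (fun x => (mdim M x + mdim N x)%N)
    (fun x y => block_mx (mmap M x y) 0 0 (mmap N x y)).

(* k^{(+) n}: the constant module with value k^n and identity maps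
   (the n-fold direct sum of the constant module k). *)
Definition const_pmod (k : fieldType) (I : Type) (n : nat) : pmod k I :=
  @PMod k I (fun _ => n) (fun _ _ => 1%:M).

(* S^{(+) d}: value k^d everywhere, identity at x = x, zero maps on strict
   relations (the d-fold direct sum of S_P). *)
Definition simple_pmod (k : fieldType) (I : eqType) (d : nat) : pmod k I :=
  @PMod k I (fun _ => d) (fun x y => if x == y then 1%:M else 0).

Section PosetDefs.
Context {disp : Order.disp_t} {T : finPOrderType disp}.
Local Close Scope ring_scope.

Definition covers (x y : T) : bool :=
  (x < y)%O && [forall z : T, ~~ ((x < z)%O && (z < y)%O)].

Definition comp_length_ge (m : nat) : Prop :=
  exists (x : T) (s : seq T), (m <= size s)%N /\ path covers x s.

Definition minimal (x : T) : Prop := forall z : T, (z <= x)%O -> z = x.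

Definition hasse_rooted_tree (r : T) : Prop :=
  minimal r /\ (forall m, minimal m -> m = r) /\
  (forall x, x != r -> exists! y, covers y x).

Definition G1 : Type := {p : T * T | (p.1 < p.2)%O}.
Definition G1_le (u v : G1) : bool := (u == v) || ((val u).2 <= (val v).1)%O.
Definition d0 (u : G1) : T := (val u).2.
Definition d1 (u : G1) : T := (val u).1.
End PosetDefs.

(* Main.v *)
Require Import Defs.
From HB Require Import structures.
From mathcomp Require Import all_boot all_order all_algebra.
From Stdlib Require Import ClassicalEpsilon.
From mathcomp Require Import zify.
Import Order.TTheory GRing.Theory.
Local Open Scope ring_scope.

Lemma exists_min (disp : Order.disp_t) (T : finPOrderType disp) (P : pred T) (y : T) :
  P y -> exists c, [/\ P c, (c <= y)%O & forall w, P w -> ~~ (w < c)%O].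
Proof.
move=> Py.
have [N] := ubnP #|[set w | P w && (w < y)%O]|.
elim: N y Py => [y _ H0|N IH y Py HN]; first by rewrite ltn0 in H0.
case: (pickP [pred w | P w && (w < y)%O]) => [w /andP[Pw wy] | H].
- have [|c [Pc cw cmin]] := IH w Pw.
    rewrite ltnS in HN; apply: leq_trans HN; apply: proper_card.
    rewrite properE; apply/andP; split.
      apply/subsetP => z; rewrite !inE => /andP[-> zw] /=; exact: lt_trans zw wy.
    apply/subsetPn; exists w; rewrite !inE ?Pw ?wy ?ltxx //.
  exists c; split => //; exact: le_trans cw (ltW wy).
- exists y; split => // w Pw; apply/negP => wy; by have := H w; rewrite /= Pw wy.
Qed.

Lemma ex_base (k : fieldType) p q (K : 'M[k]_(q, p)) d :
  \rank K = d -> exists D : 'M[k]_(d, p), (D :=: K)%MS.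
Proof. move=> <-; exists (row_base K); exact: eq_row_base. Qed.

Lemma g1_rank (k : fieldType) (disp : Order.disp_t) (T : finPOrderType disp)
  (M : pmod k T) : mod_iso G1_le (pullback d0 M) (pullback d1 M) ->
  forall a b c d : T, (a < b)%O -> (b <= c)%O -> (c < d)%O ->
  \rank (mmap M b d) = \rank (mmap M a c).
Proof.
case=> phi [psi [Hinv Hnat]] a b c d ab bc cd.
pose u : @G1 _ T := exist _ (a, b) ab.
pose v : @G1 _ T := exist _ (c, d) cd.
have H : mmap M b d *m phi v = phi u *m mmap M a c.
  by apply: (Hnat u v); rewrite /G1_le /= bc orbT.
have [Hu1 Hu2] := Hinv u; have [Hv1 Hv2] := Hinv v.
apply/eqP; rewrite eqn_leq; apply/andP; split.
- have E : mmap M b d = mmap M b d *m phi v *m psi v by rewrite -mulmxA Hv1 mulmx1.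
  rewrite {1}E; apply: leq_trans (mxrankM_maxl _ _) _; rewrite H; exact: mxrankM_maxr.
- have E : mmap M a c = psi u *m (phi u *m mmap M a c) by rewrite mulmxA Hu2 mul1mx.
  rewrite {1}E; apply: leq_trans (mxrankM_maxr _ _) _; rewrite -H; exact: mxrankM_maxl.
Qed.

Theorem theorem4p9 (k : fieldType) (disp : Order.disp_t)
  (T : finPOrderType disp) (r : T) (M : pmod k T) :
  comp_length_ge (T := T) 3 ->
  hasse_rooted_tree r ->
  (exists! s : T, covers r s) ->
  is_module (fun x y : T => (x <= y)%O) M ->
  mod_iso G1_le (pullback d0 M) (pullback d1 M) ->
  exists n d : nat,
    mod_iso (fun x y : T => (x <= y)%O) M
      (dsum (const_pmod k T n) (simple_pmod k T d)) /\
    (forall x y : T, (x < y)%O -> \rank (mmap M x y) = n) /\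
    (forall x y : T, (x < y)%O -> \rank (kermx (mmap M x y)) = d).
Proof.
move=> [x0 [sq [Hsz Hpath]]] [Hmin [Huniq _]] [s [Hrs Hsuniq]] [HM1 HMc] Hiso.
have g1 := @g1_rank k disp T M Hiso.
have Hroot : forall z, (r <= z)%O.
  move=> z; have [c [_ cz cmin]] := @exists_min _ T predT z isT.
  have : minimal c.
    move=> w; rewrite le_eqVlt => /orP[/eqP //|wc].
    by have := cmin w isT; rewrite wc.
  by move/Huniq => <-.
have rs : (r < s)%O by case/andP: Hrs.
have Hs : forall y, (r < y)%O -> (s <= y)%O.
  move=> y ry; have [c [rc cy cmin]] := @exists_min _ T (fun w => (r < w)%O) y ry.
  have cov : covers r c.
    apply/andP; split => //; apply/forallP => z; apply/negP => /andP[rz zc].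
    by have := cmin z rz; rewrite zc.
  by rewrite (Hsuniq c cov).
have [x2 [x3 [sx2 x23]]] : exists x2 x3, (s < x2)%O /\ (x2 < x3)%O.
  case: sq Hsz Hpath => [|a [|b [|c q]]] //= _ /and4P[/andP[x0a _] /andP[ab _] /andP[bc _] _].
  exists b, c; split => //.
  exact: le_lt_trans (Hs a (le_lt_trans (Hroot x0) x0a)) ab.
have Hdim : forall x, mdim M x = mdim M r.
  move=> x; case: (eqVneq x r) => [->//|xr].
  have rx : (r < x)%O by rewrite lt_neqAle eq_sym xr Hroot.
  case: Hiso => phi [psi [Hinv _]].
  pose u : @G1 _ T := exist _ (r, x) rx.
  have [H1 H2] := Hinv u.
  apply/eqP; rewrite eqn_leq; apply/andP; split.
  - have := mxrankM_maxr (phi u) (psi u); rewrite H1 mxrank1 => h.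
    exact: leq_trans h (rank_leq_row _).
  - have := mxrankM_maxr (psi u) (phi u); rewrite H2 mxrank1 => h.
    exact: leq_trans h (rank_leq_row _).
set m := mdim M r.
set n := \rank (mmap M r s).
have Hker2 : forall x y y', (r < x)%O -> (x < y)%O -> (x < y')%O ->
    (kermx (mmap M x y) <= kermx (mmap M x y'))%MS.
  move=> x y y' rx xy xy'; case: Hiso => phi [psi [Hinv Hnat]].
  pose u : @G1 _ T := exist _ (r, x) rx.
  pose v : @G1 _ T := exist _ (x, y) xy.
  pose v' : @G1 _ T := exist _ (x, y') xy'.
  have E1 : mmap M x y *m phi v = phi u *m mmap M r x.
    by apply: (Hnat u v); rewrite /G1_le /= lexx orbT.
  have E2 : mmap M x y' *m phi v' = phi u *m mmap M r x.
    by apply: (Hnat u v'); rewrite /G1_le /= lexx orbT.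
  have [Hv1 _] := Hinv v'.
  have E : mmap M x y' = mmap M x y *m (phi v *m psi v').
    by rewrite mulmxA E1 -E2 -mulmxA Hv1 mulmx1.
  by rewrite sub_kermx E mulmxA mulmx_ker mul0mx.
have Hrx_nonmax : forall x z, (r < x)%O -> (x < z)%O -> \rank (mmap M r x) = n.
  move=> x z rx xz; have sx := Hs x rx.
  case: (eqVneq x s) => [->//|xs].
  have sx' : (s < x)%O by rewrite lt_neqAle eq_sym xs sx.
  by rewrite -(g1 r s x z rs sx xz) (g1 r s s z rs (lexx s) (lt_trans sx' xz)).
have Hrx : forall x, (r < x)%O -> \rank (mmap M r x) = n.
  move=> x rx; case: (pickP (fun z => (x < z)%O)) => [z xz | nomax].
    exact: Hrx_nonmax xz.
  case: (eqVneq x s) => [->//|xs].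
  have sx' : (s < x)%O by rewrite lt_neqAle eq_sym xs (Hs x rx).
  have e1 := mxrank_mul_ker (mmap M r s) (mmap M s x).
  have e2 := mxrank_mul_ker (mmap M r s) (mmap M s x2).
  have K1 := Hker2 s x x2 rs sx' sx2.
  have K2 := Hker2 s x2 x rs sx2 sx'.
  have Ec : \rank (mmap M r s :&: kermx (mmap M s x))%MS =
            \rank (mmap M r s :&: kermx (mmap M s x2))%MS.
    by apply/eqP; rewrite eqn_leq !mxrankS // capmxS.
  have H2 := Hrx_nonmax x2 x3 (lt_trans rs sx2) x23.
  rewrite -(HMc r s x2 (ltW rs) (ltW sx2)) in H2.
  rewrite -(HMc r s x (ltW rs) (ltW sx')).
  rewrite /n; lia.
have HF2 : forall x y, (x < y)%O -> \rank (mmap M x y) = n.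
  move=> x y xy; case: (eqVneq x r) xy => [-> xy|xr xy]; first exact: Hrx.
  have rx : (r < x)%O by rewrite lt_neqAle eq_sym xr Hroot.
  by rewrite (g1 r x x y rx (lexx x) xy); exact: Hrx.
have nm : (n <= m)%N by exact: rank_leq_row.
have KER : forall x y y', (x < y)%O -> (x < y')%O ->
    (kermx (mmap M x y) <= kermx (mmap M x y'))%MS.
  move=> x y y' xy xy'; case: (eqVneq x r) => [Ex|xr]; last first.
    by apply: Hker2 => //; rewrite lt_neqAle eq_sym xr Hroot.
  subst x.
  have Ks : forall z, (r < z)%O -> (kermx (mmap M r s) <= kermx (mmap M r z))%MS.
    move=> z rz; rewrite sub_kermx -(HMc r s z (ltW rs) (Hs z rz)).
    by rewrite mulmxA mulmx_ker mul0mx.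
  apply: submx_trans (Ks y' xy').
  by rewrite -(mxrank_leqif_sup (Ks y xy)).2 !mxrank_ker !HF2.
set d := (m - n)%N.
have [B HB] : exists B : 'M[k]_(n, mdim M r), (B :=: (kermx (mmap M r s))^C)%MS.
  apply: ex_base; rewrite mxrank_compl mxrank_ker -/m -/n; lia.
have HB1 : forall x, \rank (B *m mmap M r x) = n.
  move=> x; case: (eqVneq x r) => [->|xr].
    by rewrite HM1 mulmx1 HB mxrank_compl mxrank_ker -/m -/n; lia.
  have rx : (r < x)%O by rewrite lt_neqAle eq_sym xr Hroot.
  have e := mxrank_mul_ker B (mmap M r x).
  have c0 : \rank (B :&: kermx (mmap M r x))%MS = 0%N.
    apply/eqP; rewrite -leqn0.
    have -> : 0%N = \rank ((kermx (mmap M r s))^C :&: kermx (mmap M r s))%MS.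
      by rewrite capmxC capmx_compl mxrank0.
    apply: mxrankS; apply: capmxS; first by rewrite HB.
    exact: KER.
  have rB : \rank B = n by rewrite HB mxrank_compl mxrank_ker -/m -/n; lia.
  lia.
have HD : forall x, exists D : 'M[k]_(d, mdim M x),
    \rank (col_mx (B *m mmap M r x) D) = (n + d)%N /\
    forall y, (x < y)%O -> D *m mmap M x y = 0.
  move=> x; case: (pickP (fun z => (x < z)%O)) => [y xy | nomax].
  - have [|D HDD] := @ex_base k _ _ (kermx (mmap M x y)) d.
      by rewrite mxrank_ker HF2 // Hdim.
    exists D; split; last first.
      move=> y' xy'; apply/eqP; rewrite -sub_kermx.
      by apply: submx_trans (KER _ _ _ xy xy'); rewrite HDD.
    rewrite -addsmxE.
    have sc := mxrank_sum_cap (B *m mmap M r x) D.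
    have e := mxrank_mul_ker (B *m mmap M r x) (mmap M x y).
    rewrite -mulmxA HMc ?Hroot ?(ltW xy) // HB1 in e.
    have c0 : \rank (B *m mmap M r x :&: D)%MS = 0%N.
      apply/eqP; rewrite -leqn0.
      apply: (@leq_trans (\rank (B *m mmap M r x :&: kermx (mmap M x y))%MS)).
        by apply: mxrankS; apply: capmxS => //; rewrite HDD.
      by rewrite HB1 in e; lia.
    have rD : \rank D = d by rewrite HDD mxrank_ker HF2 // Hdim.
    rewrite HB1 rD in sc; lia.
  - have [|D HDD] := @ex_base k _ _ ((B *m mmap M r x)^C)%MS d.
      by rewrite mxrank_compl HB1 Hdim.
    exists D; split; last by move=> y xy; have := nomax y; rewrite /= xy.
    rewrite -addsmxE.
    have sc := mxrank_sum_cap (B *m mmap M r x) D.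
    have c0 : \rank (B *m mmap M r x :&: D)%MS = 0%N.
      apply/eqP; rewrite -leqn0.
      have -> : 0%N = \rank (B *m mmap M r x :&: (B *m mmap M r x)^C)%MS.
        by rewrite capmx_compl mxrank0.
      by apply: mxrankS; apply: capmxS => //; rewrite HDD.
    have rD : \rank D = d by rewrite HDD mxrank_compl HB1 Hdim.
    rewrite HB1 rD in sc; lia.
pose Df := fun x => proj1_sig (constructive_indefinite_description _ (HD x)).
have HDf : forall x, \rank (col_mx (B *m mmap M r x) (Df x)) = (n + d)%N /\
    forall y, (x < y)%O -> Df x *m mmap M x y = 0.
  move=> x; exact: (proj2_sig (constructive_indefinite_description _ (HD x))).
pose psi := fun x => col_mx (B *m mmap M r x) (Df x).
pose phi := fun x => pinvmx (psi x).
have Hfree : forall x, row_free (psi x) by move=> x; rewrite /row_free (HDf x).1.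
have Hfull : forall x, row_full (psi x).
  by move=> x; rewrite /row_full (HDf x).1 Hdim -/m; apply/eqP; rewrite /d; lia.
have Hr : forall x, psi x *m phi x = 1%:M by move=> x; exact: mulmxVp.
have Hl : forall x, phi x *m psi x = 1%:M by move=> x; exact: mulVpmx.
exists n, d; split; [|split].
- exists phi, psi; split; first by move=> x; split.
  move=> x y; rewrite le_eqVlt => /orP[/eqP <-|xy] /=.
    by rewrite eqxx HM1 -scalar_mx_block mulmx1 mul1mx.
  rewrite (lt_eqF xy).
  have E : psi x *m mmap M x y = block_mx 1%:M 0 0 0 *m psi y.
    rewrite /psi mul_col_mx mul_block_col !mul1mx !mul0mx !addr0.
    by rewrite -mulmxA HMc ?Hroot ?(ltW xy) // (HDf x).2.
  rewrite -[mmap M x y]mul1mx -(Hl x) -!mulmxA (mulmxA (psi x)) E.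
  by rewrite -!mulmxA Hr mulmx1.
- exact: HF2.
- by move=> x y xy; rewrite mxrank_ker HF2 // Hdim.
Qed.
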